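(* Let $G$ be a connected graph with a cut-vertex $v$, and let $R\subseteq V(G)$ be such that at least two connected components of $G-v$ contain elements of $R$. If $x,y\in V(G)$ satisfy $d(v,x)\neq d(v,y)$, then there exists $r\in R$ with $r\neq v$ such that $d(r,x)\neq d(r,y)$.
   Context: All graphs are finite and simple. For vertices $u,w$ of a connected graph $G$, $d(u,w)$ is the length of a shortest $u$–$w$ path in $G$. A cut-vertex is a vertex $v$ such that $G-v$ is disconnected. $R$ need not be a resolving set. *)

(* Defs.v *)
From mathcomp Require Import all_boot.
Set Implicit Arguments.
Unset Strict Implicit.
Unset Printing Implicit Defensive.

Definition simple_graph (T : finType) (e : rel T) : Prop :=
  symmetric e /\ irreflexive e.

Definition connected_graph (T : finType) (e : rel T) : Prop :=
  forall x y : T, connect e x y.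

Fixpoint ball (T : finType) (e : rel T) (n : nat) (u : T) : {set T} :=
  match n with
  | 0 => [set u]
  | n'.+1 => ball e n' u :|: [set y | [exists x in ball e n' u, e x y]]
  end.

(* d(u,w): least n such that w is reachable from u by a walk of length n
   (= length of a shortest u-w path). Meaningful when the graph is connected,
   since any shortest walk has length < #|T|. *)
Definition dist (T : finType) (e : rel T) (u w : T) : nat :=
  find (fun n => w \in ball e n u) (iota 0 #|T|).

Definition del_vertex (T : finType) (e : rel T) (v : T) : rel T :=
  fun x y => [&& x != v, y != v & e x y].

Definition same_comp_minus (T : finType) (e : rel T) (v x y : T) : bool :=
  [&& x != v, y != v & connect (del_vertex e v) x y].

Definition cut_vertex (T : finType) (e : rel T) (v : T) : Prop :=
  exists x y : T, x != v /\ y != v /\ ~~ connect (del_vertex e v) x y.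

(* Main.v *)
Require Import Defs.
From mathcomp Require Import all_boot.

Section S.
Variables (T : finType) (e : rel T).

Definition W (u w : T) (n : nat) :=
  exists p, [/\ path e u p, last u p = w & size p <= n].

Lemma ballP n u w : reflect (W u w n) (w \in ball e n u).
Proof.
elim: n w => [|n IH] w /=.
  rewrite in_set1; apply: (iffP eqP) => [->|[[|a p] [_ /= <-]]] //.
  by exists [::].
rewrite in_setU in_set; apply: (iffP orP).
  case=> [/IH [p [H1 H2 H3]]|/existsP [z /andP [/IH [p [H1 H2 H3]] Hz]]].
    by exists p; split=> //; apply: leqW.
  exists (rcons p w); rewrite rcons_path H1 H2 Hz last_rcons size_rcons; split=> //.
case=> p [H1 H2 H3].
case: (leqP (size p) n) => Hs.
  by left; apply/IH; exists p.
right; move: H1 H2 H3 Hs; case/lastP: p => [|p z] //.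
rewrite rcons_path last_rcons size_rcons => /andP [Hp Hz] <- Hs _.
apply/existsP; exists (last u p); rewrite Hz andbT.
by apply/IH; exists p.
Qed.

Hypothesis conn : connected_graph e.

Lemma W_small u w : exists2 n, n < #|T| & W u w n.
Proof.
have /connectP [p Hp Hl] := conn u w.
move: Hl; case: (shortenP Hp) => p' Hp' Hu _ Hl.
exists (size p'); last by exists p'; split.
have := max_card (mem (u :: p')).
by move/card_uniqP: Hu => ->.
Qed.

Lemma dist_W u w : W u w (dist e u w).
Proof.
apply/ballP.
have [n Hn /ballP Hw] := W_small u w.
have Hhas : has (fun n => w \in ball e n u) (iota 0 #|T|).
  by apply/hasP; exists n => //; rewrite mem_iota.
have := nth_find 0 Hhas.
rewrite has_find size_iota in Hhas.
by rewrite nth_iota // add0n.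
Qed.

Lemma dist_le u w n : W u w n -> dist e u w <= n.
Proof.
move=> HW.
have Hlt : dist e u w < #|T|.
  have [m Hm /ballP Hw] := W_small u w.
  have Hh : has (fun n => w \in ball e n u) (iota 0 #|T|).
    by apply/hasP; exists m => //; rewrite mem_iota.
  by move: Hh; rewrite has_find size_iota.
case: (leqP #|T| n) => Hn; first by apply: ltnW; apply: leq_trans Hn.
rewrite leqNgt; apply/negP => Hd.
have := before_find 0 Hd.
by rewrite nth_iota // add0n; move/ballP: HW => ->.
Qed.

Lemma W_cat u a b n1 n2 : W u a n1 -> W a b n2 -> W u b (n1 + n2).
Proof.
move=> [p [H1 H2 H3]] [q [K1 K2 K3]].
exists (p ++ q); rewrite cat_path last_cat H2 H1 K1 size_cat; split=> //.
exact: leq_add.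
Qed.

Lemma dist_tri u a b : dist e u b <= dist e u a + dist e a b.
Proof. by apply: dist_le; apply: W_cat; apply: dist_W. Qed.

Lemma path_del v a p : path e a p -> a != v -> v \notin p ->
  path (del_vertex e v) a p.
Proof.
elim: p a => [|b p IH] a //= /andP [Hab Hp] Hav.
rewrite in_cons negb_or => /andP [Hbv Hvp].
rewrite /del_vertex Hav eq_sym Hbv Hab /=; apply: (IH b Hp _ Hvp); by rewrite eq_sym.
Qed.

Lemma dist_cut v r x : r != v -> ~~ connect (del_vertex e v) r x ->
  dist e r x = dist e r v + dist e v x.
Proof.
move=> Hrv Hc; apply/eqP; rewrite eqn_leq dist_tri.
have [p [H1 H2 H3]] := dist_W r x.
have Hv : v \in p.
  apply/negPn/negP => Hn; move/negP: Hc; apply; apply/connectP.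
  exists p; last by rewrite H2.
  exact: path_del.
move: H1 H2 H3; case/path.splitP: Hv => p1 p2.
rewrite cat_path last_cat last_rcons size_cat size_rcons => /andP [K1 K2] K3 K4.
apply: leq_trans K4; apply: leq_add; apply: dist_le.
  by exists (rcons p1 v); rewrite last_rcons size_rcons.
by exists p2.
Qed.

End S.

Theorem lemma1 (T : finType) (e : rel T) (v : T) (R : {set T}) (x y : T) :
  simple_graph e ->
  connected_graph e ->
  cut_vertex e v ->
  (exists r1 r2 : T, [/\ r1 \in R, r2 \in R, r1 != v, r2 != v &
                        ~~ same_comp_minus e v r1 r2]) ->
  dist e v x <> dist e v y ->
  exists r : T, [/\ r \in R, r != v & dist e r x <> dist e r y].
Proof.
move=> [sym _] conn _ [r1 [r2 [R1 R2 N1 N2 Hs]]] Hxy.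
set C := connect (del_vertex e v).
have Csym : connect_sym (del_vertex e v).
  apply: sym_connect_sym => a b; rewrite /del_vertex sym.
  by case: (a != v); case: (b != v).
have Hr12 : ~~ C r1 r2 by move: Hs; rewrite /same_comp_minus N1 N2.
have good : forall r, r \in R -> r != v -> ~~ C r x -> ~~ C r y ->
    exists r : T, [/\ r \in R, r != v & dist e r x <> dist e r y].
  move=> r HR Hv Hx Hy; exists r; split=> //.
  rewrite (@dist_cut _ _ conn _ _ _ Hv Hx) (@dist_cut _ _ conn _ _ _ Hv Hy) => /eqP.
  by rewrite eqn_add2l => /eqP.
have core : forall s1 s2, s1 \in R -> s2 \in R -> s1 != v -> s2 != v ->
    C s1 x -> C s2 y -> ~~ C s1 y -> ~~ C s2 x ->
    exists r : T, [/\ r \in R, r != v & dist e r x <> dist e r y].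
  move=> s1 s2 S1 S2 M1 M2 C1 C2 D1 D2.
  case: (eqVneq (dist e s1 x) (dist e s1 y)) => E1; last first.
    by exists s1; split=> //; apply/eqP.
  case: (eqVneq (dist e s2 x) (dist e s2 y)) => E2; last first.
    by exists s2; split=> //; apply/eqP.
  exfalso; apply: Hxy.
  have := @dist_tri _ _ conn s1 v x; have := @dist_tri _ _ conn s2 v y.
  rewrite -E2 (@dist_cut _ _ conn _ _ _ M2 D2) E1 (@dist_cut _ _ conn _ _ _ M1 D1).
  rewrite !leq_add2l => A B; apply/eqP; rewrite eqn_leq A B //.
have Ctr : forall a b z, C a z -> C b z -> C a b.
  by move=> a b z Ha Hb; apply: connect_trans Ha _; rewrite /C Csym.
case: (boolP (C r1 x)) => H1x; case: (boolP (C r1 y)) => H1y.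
- apply: (good r2) => //; apply/negP => H.
    by move/negP: Hr12; apply; apply: Ctr H1x H.
  by move/negP: Hr12; apply; apply: Ctr H1y H.
- case: (boolP (C r2 x)) => H2x.
    by move/negP: Hr12; case; apply: Ctr H1x H2x.
  case: (boolP (C r2 y)) => H2y; last by apply: (good r2).
  exact: (core r1 r2).
- case: (boolP (C r2 y)) => H2y.
    by move/negP: Hr12; case; apply: Ctr H1y H2y.
  case: (boolP (C r2 x)) => H2x; last by apply: (good r2).
  exact: (core r2 r1).
- exact: (good r1).
Qed.
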